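(* Let $G$ be a graph, $k$ a positive integer and $\mathbb{F}$ a field whose characteristic is either $0$ or a positive number not dividing $k$. Suppose the polynomials $y_v^k - 1$ ($v\in V(G)$) and $\sum_{j=0}^{k-1} y_u^{j} y_v^{k-1-j}$ ($\{u,v\}\in E(G)$) have a polynomial calculus refutation of degree $d$ over $\mathbb{F}$. Then $\mathbb{F}$ can be extended to a field $\mathbb{E}$ containing a primitive $k$th root of unity $w$, and the polynomials $$\sum_{j=1}^{k} x_{v,j} - 1 \ (v \in V(G)),\qquad x_{v,j}x_{v,j'} \ (v \in V(G),\ j\neq j' \in [k]),\qquad x_{u,j}x_{v,j}\ (\{u,v\} \in E(G),\ j \in [k])$$ have a polynomial calculus refutation over $\mathbb{E}$ of degree $\max\{2k,d\}$.
   Context: Polynomial calculus over a field $\mathbb{F}$: a derivation of $r$ from a set $S$ of polynomials is a sequence $p_1,\dots,p_\tau=r$ in which each $p_t$ is an element of $S$, a linear combination $\alpha p_i+\beta p_j$ ($i,j<t$, $\alpha,\beta$ field elements), a product $x p_i$ ($i<t$, $x$ a variable), or (for the system in the $\{0,1\}$-variables $x_{v,j}$) a Boolean axiom $x^2-x$. For the system in the variables $y_v$ no Boolean axioms are used. A refutation is a derivation of $1$; its degree is the maximum total degree of its polynomials. *)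

(* Defs.v *)
From HB Require Import structures.
From mathcomp Require Import all_boot all_algebra.
From mathcomp Require Import mpoly.
Set Implicit Arguments. Unset Strict Implicit. Unset Printing Implicit Defensive.
Import GRing.Theory.
Local Open Scope ring_scope.

Section PC.
Variables (R : fieldType) (n : nat).

(* Total degree of a polynomial (the zero polynomial gets degree 0). *)
Definition pdeg (p : {mpoly R[n]}) : nat := (msize p).-1.

Definition pc_step (S : {mpoly R[n]} -> Prop) (bool_ax : bool)
  (prev : seq {mpoly R[n]}) (p : {mpoly R[n]}) : Prop :=
  [\/ S p,
      (exists q1 q2 (a b : R), [/\ q1 \in prev, q2 \in prev & p = a *: q1 + b *: q2]),
      (exists q (x : 'I_n), q \in prev /\ p = 'X_x * q)
    | bool_ax /\ (exists x : 'I_n, p = 'X_x ^+ 2 - 'X_x)].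

Definition pc_derivation (S : {mpoly R[n]} -> Prop) (bool_ax : bool)
  (s : seq {mpoly R[n]}) : Prop :=
  forall t, (t < size s)%N -> pc_step S bool_ax (take t s) (nth 0 s t).

Definition pc_degree (s : seq {mpoly R[n]}) : nat := \max_(p <- s) pdeg p.

Definition pc_refutation (S : {mpoly R[n]} -> Prop) (bool_ax : bool)
  (d : nat) : Prop :=
  exists s : seq {mpoly R[n]},
    [/\ pc_derivation S bool_ax s, s != [::], last 0 s = 1 & pc_degree s = d].
End PC.

Definition y_var (F : fieldType) (V : finType) (v : V) : {mpoly F[#|V|]} :=
  'X_(enum_rank v).

Definition y_system (F : fieldType) (V : finType) (e : rel V) (k : nat)
  (p : {mpoly F[#|V|]}) : Prop :=
  (exists v, p = y_var F v ^+ k - 1) \/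
  (exists u v, e u v /\
     p = \sum_(j < k) y_var F u ^+ j * y_var F v ^+ (k.-1 - j)).

Definition x_var (E : fieldType) (V : finType) (k : nat) (v : V) (j : 'I_k)
  : {mpoly E[#|{: V * 'I_k}|]} := 'X_(enum_rank (v, j)).

Definition x_system (E : fieldType) (V : finType) (e : rel V) (k : nat)
  (p : {mpoly E[#|{: V * 'I_k}|]}) : Prop :=
  [\/ (exists v, p = \sum_(j < k) x_var E v j - 1),
      (exists v (j j' : 'I_k), j != j' /\ p = x_var E v j * x_var E v j')
    | (exists u v (j : 'I_k), e u v /\ p = x_var E u j * x_var E v j)].

(* Main.v *)
Require Import Defs.
From HB Require Import structures.
From mathcomp Require Import all_boot all_algebra.
From mathcomp Require Import mpoly.
From mathcomp Require Import fieldext separable cyclic.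
From mathcomp Require Import zify.
From Stdlib Require Import Classical.
Import GRing.Theory.
Local Open Scope ring_scope.

Lemma exists_irr_factor (F : fieldType) (p : {poly F}) :
  (1 < size p)%N -> exists q : {poly F}, irreducible_poly q /\ q %| p.
Proof.
move: {2}(size p) (leqnn (size p)) => m; elim: m p => [|m IH] p Hs Hp.
  by rewrite leqn0 in Hs; rewrite (eqP Hs) in Hp.
case: (classic (irreducible_poly p)) => [irr|nirr]; first by exists p; split.
have : ~ (forall q : {poly F}, size q != 1%N -> q %| p -> q %= p).
  by move=> H; apply: nirr; split.
move/not_all_ex_not=> [q Hq].
have [sq Hq'] := imply_to_and _ _ Hq.
have [dq nq] := imply_to_and _ _ Hq'.
have p0 : p != 0 by rewrite -size_poly_gt0 (ltn_trans _ Hp).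
have q0 : q != 0 by apply: contraNneq p0 => q0; move: dq; rewrite q0 dvd0p.
have sq2 : (1 < size q)%N.
  by move: sq q0; rewrite -size_poly_eq0; case: (size q) => [|[|]].
have sqp : (size q < size p)%N.
  rewrite ltn_neqAle dvdp_size_eqp // (dvdp_leq p0 dq) andbT.
  by apply/negP => /eqP H; apply: nq; apply/eqP.
have [r [ir dr]] := IH q (leq_trans sqp Hs) sq2.
by exists r; split => //; apply: dvdp_trans dr dq.
Qed.

Lemma splitting_ext (m : nat) : forall (F : fieldType) (p : {poly F}),
  p \is monic -> (size p <= m.+1)%N ->
  exists (E : fieldType) (f : {rmorphism F -> E}) (rs : seq E),
    map_poly f p = \prod_(r <- rs) ('X - r%:P).
Proof.
elim: m => [|m IH] F p mp sp.
  have : size p = 1%N.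
    by apply/eqP; rewrite eqn_leq sp /= size_poly_gt0 monic_neq0.
  move=> s1; have pC := size1_polyC (eq_leq s1).
  exists F, (idfun : {rmorphism F -> F}), [::].
  rewrite big_nil map_poly_id // {1}pC.
  rewrite -polyC1; congr (_ %:P); by rewrite -(monicP mp) lead_coefE s1.
case: (ltnP 1 (size p)) => sp1; last first.
  exact: (IH F p mp (leq_trans sp1 (ltn0Sn m))).
have [q [iq dq]] := @exists_irr_factor F p sp1.
have [L _ [z zq _]] := irredp_FAdjoin iq.
set g := in_alg L.
have zp : root (map_poly g p) z.
  move: dq => /dvdpP [c ->]; by rewrite rmorphM /= rootM zq orbT.
have [p' Hp'] := factor_theorem _ _ zp.
have mp' : p' \is monic.
  by rewrite -(monicMr _ (monicXsubC z)) -Hp' map_monic.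
have sp' : (size p' <= m.+1)%N.
  have e1 : size (map_poly g p) = size p by rewrite size_map_poly.
  have e2 : size (p' * ('X - z%:P)) = (size p').+1.
    by rewrite size_Mmonic ?monicXsubC ?monic_neq0 // size_XsubC addn2.
  by move: sp; rewrite -e1 Hp' e2 ltnS.
have [E [f [rs Hrs]]] := IH L p' mp' sp'.
exists E, (f \o g)%FUN, (f z :: rs).
rewrite big_cons map_poly_comp Hp' rmorphM /= Hrs rmorphB /= map_polyX map_polyC /=.
by rewrite mulrC.
Qed.

Lemma prim_root_ext (F : fieldType) (k : nat) : (0 < k)%N ->
  (forall p : nat, p \in [pchar F] -> ~~ (p %| k)%N) ->
  exists (E : fieldType) (f : {rmorphism F -> E}) (w : E), k.-primitive_root w.
Proof.
move=> k0 hch.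
have kF : (k%:R : F) != 0.
  apply/negP => /eqP k0F.
  have [p pp] := natf0_pchar k0 (introT eqP k0F).
  by move: (hch p pp); rewrite (dvdn_pcharf pp) k0F eqxx.
have [E [f [rs Hrs]]] := @splitting_ext k F ('X^k - 1) (monicXnsubC 1 k0)
  (eq_leq (size_XnsubC 1 k0)).
have kE : (k%:R : E) != 0 by rewrite -(rmorph_nat f) fmorph_eq0.
have Hrs' : 'X^k - 1 = \prod_(r <- rs) ('X - r%:P).
  by rewrite -Hrs rmorphB /= map_polyXn rmorph1.
have urs : uniq rs.
  rewrite -separable_prod_XsubC -Hrs' unlock /separable_poly.
  apply/Bezout_eq1_coprimepP; exists (-1, (k%:R)^-1 *: 'X) => /=.
  rewrite derivB derivXn derivC subr0 -scalerAl mulrnAr -scaler_nat scalerA.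
  rewrite mulVf // scale1r -exprS prednK // mulN1r opprB subrK //.
have sz : size rs = k.
  have e1 : size ('X^k - 1 : {poly E}) = k.+1 by rewrite size_XnsubC.
  by move: e1; rewrite Hrs' size_prod_XsubC => -[].
have allr : all k.-unity_root rs.
  apply/allP => r rr; rewrite unity_rootE -subr_eq0.
  have : root ('X^k - 1) r by rewrite Hrs' root_prod_XsubC.
  by rewrite /root !hornerE.
have := has_prim_root k0 allr urs (eq_leq (esym sz)).
by move/hasP => [w _ wp]; exists E, f, w.
Qed.


Set Implicit Arguments. Unset Strict Implicit. Unset Printing Implicit Defensive.

Section Pdeg.
Variables (R : fieldType) (n : nat).
Implicit Types (p q : {mpoly R[n]}).

Lemma pdegD p q : (pdeg (p + q) <= maxn (pdeg p) (pdeg q))%N.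
Proof. rewrite /pdeg; have := msizeD_le p q; lia. Qed.

Lemma pdegN p : pdeg (- p) = pdeg p.
Proof. by rewrite /pdeg msizeN. Qed.

Lemma pdegB p q : (pdeg (p - q) <= maxn (pdeg p) (pdeg q))%N.
Proof. by rewrite -(pdegN q); apply: pdegD. Qed.

Lemma pdegZ c p : (pdeg (c *: p) <= pdeg p)%N.
Proof. rewrite /pdeg; have := msizeZ_le p c; lia. Qed.

Lemma pdeg0 : pdeg (0 : {mpoly R[n]}) = 0%N.
Proof. by rewrite /pdeg msize0. Qed.

Lemma pdegC c : pdeg (c%:MP : {mpoly R[n]}) = 0%N.
Proof. rewrite /pdeg msizeC; by case: (c != 0). Qed.

Lemma pdeg1 : pdeg (1 : {mpoly R[n]}) = 0%N.
Proof. by rewrite /pdeg msize1. Qed.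

Lemma pdegXU i : pdeg ('X_i : {mpoly R[n]}) = 1%N.
Proof. by rewrite /pdeg msizeX mdeg1. Qed.

Lemma pdegM p q : (pdeg (p * q) <= pdeg p + pdeg q)%N.
Proof.
have [->|p0] := eqVneq p 0; first by rewrite mul0r pdeg0.
have [->|q0] := eqVneq q 0; first by rewrite mulr0 pdeg0.
rewrite /pdeg msizeM //.
have : msize p != 0%N by rewrite msize_poly_eq0.
have : msize q != 0%N by rewrite msize_poly_eq0.
move: (msize p) (msize q) => [|a] [|c] //= _ _; lia.
Qed.

Lemma pdegMX i p : p != 0 -> pdeg ('X_i * p) = (pdeg p).+1.
Proof.
move=> p0; rewrite /pdeg msizeM ?msizeX ?mdeg1 //; last first.
  by rewrite -msize_poly_eq0 msizeX.
have : msize p != 0%N by rewrite msize_poly_eq0.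
move: (msize p) => [|a] //= _; lia.
Qed.

Lemma pdeg_sum (I : Type) (r : seq I) (P : pred I) (F : I -> {mpoly R[n]}) m :
  (forall i, P i -> (pdeg (F i) <= m)%N) -> (pdeg (\sum_(i <- r | P i) F i) <= m)%N.
Proof.
move=> H; apply: (big_ind (fun p => pdeg p <= m)%N) => //.
  by rewrite pdeg0.
move=> x y hx hy; apply: leq_trans (pdegD x y) _; by rewrite geq_max hx hy.
Qed.

Lemma pdeg_prod (I : Type) (r : seq I) (P : pred I) (F : I -> {mpoly R[n]}) :
  (pdeg (\prod_(i <- r | P i) F i) <= \sum_(i <- r | P i) pdeg (F i))%N.
Proof.
apply: (big_ind2 (fun p m => pdeg p <= m)%N) => //.
  by rewrite pdeg1.
move=> x1 m1 x2 m2 h1 h2; apply: leq_trans (pdegM x1 x2) _; exact: leq_add.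
Qed.

Lemma pdegXn p k : (pdeg (p ^+ k) <= k * pdeg p)%N.
Proof.
elim: k => [|k IH]; first by rewrite expr0 pdeg1.
rewrite exprS; apply: leq_trans (pdegM _ _) _; rewrite mulSn leq_add2l //.
Qed.

End Pdeg.

Section Der.
Variables (R : fieldType) (n : nat) (S : {mpoly R[n]} -> Prop) (b : bool) (D : nat).
Implicit Types (p q : {mpoly R[n]}).

Lemma step_sub prev prev' p : {subset prev <= prev'} ->
  pc_step S b prev p -> pc_step S b prev' p.
Proof.
move=> sub [H|[q1 [q2 [a [c [h1 h2 ->]]]]]|[q [x [hq ->]]]|H].
- exact: Or41.
- by apply: Or42; exists q1, q2, a, c; split; auto.
- by apply: Or43; exists q, x; split; auto.
- exact: Or44.
Qed.

Lemma deriv_cat s1 s2 : pc_derivation S b s1 -> pc_derivation S b s2 ->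
  pc_derivation S b (s1 ++ s2).
Proof.
move=> h1 h2 t; rewrite size_cat => ht; rewrite nth_cat take_cat.
case: ltnP => tl; first exact: h1.
apply: step_sub (h2 (t - size s1)%N _); first by move=> q; rewrite mem_cat => ->; rewrite orbT.
by rewrite ltn_subLR.
Qed.

Lemma deriv_rcons s p : pc_derivation S b s -> pc_step S b s p ->
  pc_derivation S b (rcons s p).
Proof.
move=> h hp t; rewrite -cats1 size_cat /= addn1 ltnS => ht; rewrite nth_cat take_cat.
case: ltnP => tl; first exact: h.
have -> : (t - size s = 0)%N by apply/eqP; rewrite subn_eq0.
by rewrite take0 cats0.
Qed.

Definition Der p := exists s, [/\ pc_derivation S b s, s != [::], last 0 s = p &
   all (fun q => pdeg q <= D)%N s].

Lemma Der_mem p : Der p -> exists s, [/\ pc_derivation S b s, s != [::],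
   p \in s & all (fun q => pdeg q <= D)%N s].
Proof.
move=> [s [h1 h2 h3 h4]]; exists s; split => //.
by case: s h2 h3 {h1 h4} => // x s _ /= <-; apply: mem_last.
Qed.

Lemma Der_deg p : Der p -> (pdeg p <= D)%N.
Proof. by move=> /Der_mem [s [_ _ ps /allP al]]; exact: al. Qed.

Lemma Der_ext s p : pc_derivation S b s -> all (fun q => pdeg q <= D)%N s ->
  pc_step S b s p -> (pdeg p <= D)%N -> Der p.
Proof.
move=> h1 h2 h3 h4; exists (rcons s p); split.
- exact: deriv_rcons.
- by case: s {h1 h2 h3}.
- by rewrite last_rcons.
- by rewrite all_rcons h4.
Qed.

Lemma der_ax p : S p -> (pdeg p <= D)%N -> Der p.
Proof. by move=> h hd; apply: (@Der_ext [::]); [move=> t | | exact: Or41 | ]. Qed.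

Lemma der_bool (i : 'I_n) : b -> (2 <= D)%N -> Der ('X_i ^+ 2 - 'X_i).
Proof.
move=> hb hD; apply: (@Der_ext [::]); [by move=> t | by [] | | ].
  by apply: Or44; split => //; exists i.
apply: leq_trans (pdegB _ _) _; rewrite geq_max pdegXU.
apply/andP; split; last exact: leq_trans hD.
by apply: leq_trans (pdegXn _ _) _; rewrite pdegXU.
Qed.

Lemma der_lin p q a c : Der p -> Der q -> Der (a *: p + c *: q).
Proof.
move=> hp hq; have dp := Der_deg hp; have dq := Der_deg hq.
move: hp hq => /Der_mem [s1 [a1 b1 c1 d1]] /Der_mem [s2 [a2 b2 c2 d2]].
apply: (@Der_ext (s1 ++ s2)).
- exact: deriv_cat.
- by rewrite all_cat d1 d2.
- by apply: Or42; exists p, q, a, c; rewrite !mem_cat c1 c2 orbT.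
- apply: leq_trans (pdegD _ _) _; rewrite geq_max.
  by rewrite (leq_trans (pdegZ _ _) dp) (leq_trans (pdegZ _ _) dq).
Qed.

Lemma der_mulX p (i : 'I_n) : Der p -> (pdeg ('X_i * p) <= D)%N -> Der ('X_i * p).
Proof.
move=> /Der_mem [s1 [a1 b1 c1 d1]] hd.
apply: (@Der_ext s1) => //.
by apply: Or43; exists p, i.
Qed.

Lemma derZ p a : Der p -> Der (a *: p).
Proof. by move=> h; have := der_lin a 0 h h; rewrite scale0r addr0. Qed.

Lemma derD p q : Der p -> Der q -> Der (p + q).
Proof. by move=> h1 h2; have := der_lin 1 1 h1 h2; rewrite !scale1r. Qed.

Lemma der0 p : Der p -> Der 0.
Proof. by move=> h; have := derZ 0 h; rewrite scale0r. Qed.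

Lemma derN p : Der p -> Der (- p).
Proof. by move=> h; have := derZ (-1) h; rewrite scaleN1r. Qed.

Lemma derB p q : Der p -> Der q -> Der (p - q).
Proof. by move=> h1 h2; apply: derD => //; apply: derN. Qed.

Lemma der_sum (I : Type) (r : seq I) (P : pred I) (F : I -> {mpoly R[n]}) p0 :
  Der p0 -> (forall i, P i -> Der (F i)) -> Der (\sum_(i <- r | P i) F i).
Proof.
move=> h0 H; apply: (big_ind Der) => //; first exact: der0 h0.
exact: derD.
Qed.

Lemma der_mulXn p (i : 'I_n) k : Der p -> (pdeg p + k <= D)%N -> Der ('X_i ^+ k * p).
Proof.
move=> hp; elim: k => [|k IH] hk; first by rewrite expr0 mul1r.
rewrite exprS -mulrA; apply: der_mulX; first by apply: IH; rewrite (leq_trans _ hk) // addnS.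
apply: leq_trans (pdegM _ _) _; rewrite pdegXU.
apply: leq_trans (leq_add (leqnn 1) (pdegM _ _)) _.
apply: leq_trans (leq_add (leqnn 1) (leq_add (pdegXn _ _) (leqnn _))) _.
rewrite pdegXU muln1; lia.
Qed.

Lemma der_mulmono p (m : 'X_{1..n}) : Der p -> (pdeg p + mdeg m <= D)%N ->
  Der ('X_[m] * p).
Proof.
move=> hp; rewrite mpolyXE_id mdegE.
elim: (index_enum _) => [|i r IH]; first by rewrite !big_nil mul1r.
rewrite !big_cons => hd.
rewrite -mulrA; apply: der_mulXn.
  apply: IH; apply: leq_trans hd; lia.
apply: leq_trans (leq_add (pdegM _ _) (leqnn _)) _.
apply: leq_trans (leq_add (leq_add (pdeg_prod _ _ _) (leqnn _)) (leqnn _)) _.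
apply: leq_trans hd.
have : (\sum_(i0 <- r) pdeg (('X_i0 : {mpoly R[n]}) ^+ m i0) <= \sum_(i0 <- r) m i0)%N.
  apply: leq_sum => j _; apply: leq_trans (pdegXn _ _) _; by rewrite pdegXU muln1.
lia.
Qed.

Lemma der_mul p q : Der p -> (pdeg q + pdeg p <= D)%N -> Der (q * p).
Proof.
move=> hp hd; rewrite (mpolyE q) mulr_suml.
rewrite big_seq; apply: der_sum; first exact: (der0 hp). move=> m hm.
rewrite -scalerAl; apply: derZ; apply: der_mulmono => //.
apply: leq_trans hd; have := msize_mdeg_lt hm; rewrite /pdeg; lia.
Qed.
End Der.


Section XSys.
Variables (E : fieldType) (V : finType) (e : rel V) (k : nat) (w : E).
Hypothesis hk : (0 < k)%N.
Hypothesis hw : k.-primitive_root w.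
Variable D : nat.
Hypothesis hD : (2 * k <= D)%N.

Local Notation N := #|{: V * 'I_k}|.
Local Notation XD := (Der (@x_system E V e k) true D).
Local Notation x := (@x_var E V k).

Definition Yp (v : V) : {mpoly E[N]} := \sum_(j < k) w ^+ j *: x v j.
Definition Bp (v : V) (a : nat) : {mpoly E[N]} := \sum_(j < k) w ^+ (j * a) *: x v j.

Lemma pdeg_x v j : pdeg (x v j) = 1%N.
Proof. exact: pdegXU. Qed.

Lemma pdeg_Yp v : (pdeg (Yp v) <= 1)%N.
Proof. by apply: pdeg_sum => j _; apply: leq_trans (pdegZ _ _) _; rewrite pdeg_x. Qed.

Lemma pdeg_Bp v a : (pdeg (Bp v a) <= 1)%N.
Proof. by apply: pdeg_sum => j _; apply: leq_trans (pdegZ _ _) _; rewrite pdeg_x. Qed.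

Lemma hD2 : (2 <= D)%N.
Proof. lia. Qed.

Lemma XD_base (v : V) (j : 'I_k) : XD (x v j ^+ 2 - x v j).
Proof. by apply: der_bool => //; exact: hD2. Qed.

Lemma XD_ax p : @x_system E V e k p -> (pdeg p <= 2)%N -> XD p.
Proof. by move=> h hd; apply: der_ax h (leq_trans hd hD2). Qed.

Lemma L0 v (c d : 'I_k -> E) :
  XD ((\sum_(i < k) c i *: x v i) * (\sum_(j < k) d j *: x v j)
      - \sum_(j < k) (c j * d j) *: x v j).
Proof.
have b0 := XD_base v (Ordinal hk).
rewrite mulr_suml -sumrB; apply: der_sum; first exact: b0; move => i _.
rewrite mulr_sumr (bigD1 i) //=.
have E1 j : c i *: x v i * (d j *: x v j) = (c i * d j) *: (x v i * x v j).
  by rewrite -scalerAl -scalerAr scalerA.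
rewrite E1 (eq_bigr _ (fun j _ => E1 j)) addrAC -scalerBr -expr2.
apply: derD; first exact/derZ/XD_base.
apply: der_sum; first exact: b0; move => j hj; apply: derZ; apply: XD_ax.
  by apply: Or32; exists v, i, j; split => //; rewrite eq_sym.
by apply: leq_trans (pdegM _ _) _; rewrite !pdeg_x.
Qed.

Lemma LA v a : (a <= k)%N -> XD (Yp v ^+ a - Bp v a).
Proof.
have b0 := XD_base v (Ordinal hk).
elim: a => [|a IH] ha.
  rewrite expr0 /Bp (eq_bigr (fun j => x v j)); last first.
    by move=> j _; rewrite muln0 expr0 scale1r.
  rewrite -opprB; apply: derN; apply: XD_ax; first by apply: Or31; exists v.
  apply: leq_trans (pdegB _ _) _; rewrite pdeg1 geq_max /= andbT.
  by apply: pdeg_sum => j _; rewrite pdeg_x.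
have -> : Yp v ^+ a.+1 - Bp v a.+1 =
   Yp v * (Yp v ^+ a - Bp v a) +
   ((\sum_(i < k) w ^+ i *: x v i) * (\sum_(j < k) w ^+ (j * a) *: x v j)
      - \sum_(j < k) (w ^+ j * w ^+ (j * a)) *: x v j).
  rewrite exprS mulrBr /Yp /Bp addrA subrK; congr (_ - _).
  by apply: eq_bigr => j _; rewrite -exprD mulnS.
apply: derD; last exact: L0.
apply: der_mul; first by apply: IH; apply: ltnW.
apply: leq_trans (leq_add (pdeg_Yp v) (pdegB _ _)) _.
have : (pdeg (Yp v ^+ a) <= a)%N.
  apply: leq_trans (pdegXn _ _) _; have := pdeg_Yp v; nia.
have := pdeg_Bp v a; lia.
Qed.

Lemma L_vertex v : XD (Yp v ^+ k - 1).
Proof.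
have -> : Yp v ^+ k - 1 = (Yp v ^+ k - Bp v k) + (Bp v k - 1) by rewrite addrA subrK.
apply: derD; first exact: LA.
have -> : Bp v k = \sum_(j < k) x v j.
  apply: eq_bigr => j _; by rewrite mulnC exprM (prim_expr_order hw) expr1n scale1r.
apply: XD_ax; first by apply: Or31; exists v.
apply: leq_trans (pdegB _ _) _; rewrite pdeg1 geq_max /= andbT.
by apply: pdeg_sum => j _; rewrite pdeg_x.
Qed.

Lemma Scoef (c c' : 'I_k) : c != c' ->
  \sum_(j < k) w ^+ (c * j) * w ^+ (c' * (k.-1 - j)) = 0.
Proof.
move=> ncc.
set z := w ^+ c; set z' := w ^+ c'.
have -> : \sum_(j < k) w ^+ (c * j) * w ^+ (c' * (k.-1 - j)) =
          \sum_(j < k) z' ^+ (k.-1 - j) * z ^+ j.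
  by apply: eq_bigr => j _; rewrite mulrC !exprM.
have hz : z' - z != 0.
  rewrite subr_eq0 /z /z' (eq_prim_root_expr hw) !modn_small //.
  by rewrite eq_sym.
have : z' ^+ k - z ^+ k = 0.
  by rewrite /z /z' -!exprM [(c * k)%N]mulnC [(c' * k)%N]mulnC !exprM (prim_expr_order hw) !expr1n subrr.
rewrite subrXX => /eqP; rewrite mulf_eq0 (negbTE hz) /= => /eqP //.
Qed.

Lemma L_edge u v : e u v ->
  XD (\sum_(j < k) Yp u ^+ j * Yp v ^+ (k.-1 - j)).
Proof.
move=> euv.
have b0 := XD_base v (Ordinal hk).
have -> : \sum_(j < k) Yp u ^+ j * Yp v ^+ (k.-1 - j) =
   \sum_(j < k) ((Yp u ^+ j - Bp u j) * Yp v ^+ (k.-1 - j) +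
                 Bp u j * (Yp v ^+ (k.-1 - j) - Bp v (k.-1 - j))) +
   \sum_(j < k) Bp u j * Bp v (k.-1 - j).
  rewrite -big_split /=; apply: eq_bigr => j _.
  by rewrite mulrBl mulrBr !addrA subrK addrNK.
apply: derD.
  apply: der_sum; first exact: b0; move => j _; apply: derD.
    rewrite mulrC; apply: der_mul; first by apply: LA; apply: ltnW.
    apply: leq_trans (leq_add (pdegXn _ _) (pdegB _ _)) _.
    have := pdeg_Yp v; have := pdeg_Yp u; have := pdeg_Bp u j.
    have : (pdeg (Yp u ^+ j) <= j)%N.
      by apply: leq_trans (pdegXn _ _) _; have := pdeg_Yp u; nia.
    have := ltn_ord j; nia.
  apply: der_mul; first by apply: LA; lia.
  apply: leq_trans (leq_add (pdeg_Bp _ _) (pdegB _ _)) _.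
  have := pdeg_Bp v (k.-1 - j).
  have : (pdeg (Yp v ^+ (k.-1 - j)) <= k.-1 - j)%N.
    by apply: leq_trans (pdegXn _ _) _; have := pdeg_Yp v; nia.
  lia.
have -> : \sum_(j < k) Bp u j * Bp v (k.-1 - j) =
  \sum_(c < k) \sum_(c' < k)
     (\sum_(j < k) w ^+ (c * j) * w ^+ (c' * (k.-1 - j))) *: (x u c * x v c').
  under eq_bigr do rewrite /Bp mulr_suml.
  rewrite exchange_big /=; apply: eq_bigr => c _.
  under eq_bigr do rewrite mulr_sumr.
  rewrite exchange_big /=; apply: eq_bigr => c' _.
  rewrite scaler_suml; apply: eq_bigr => j _.
  by rewrite -scalerAl -scalerAr scalerA.
apply: der_sum; first exact: b0; move => c _; apply: der_sum; first exact: b0; move => c' _.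
have [<-|ncc] := eqVneq c c'.
  apply: derZ; apply: XD_ax; first by apply: Or33; exists u, v, c.
  by apply: leq_trans (pdegM _ _) _; rewrite !pdeg_x.
by rewrite Scoef // scale0r; apply: der0 b0.
Qed.

End XSys.


Section Sim.
Variables (F E : fieldType) (f : {rmorphism F -> E}) (V : finType) (e : rel V) (k : nat) (w : E).
Hypothesis hk : (0 < k)%N.
Hypothesis hw : k.-primitive_root w.
Variable D : nat.
Hypothesis hD : (2 * k <= D)%N.

Local Notation N := #|{: V * 'I_k}|.
Local Notation XD := (Der (@x_system E V e k) true D).

Definition fC : {rmorphism F -> {mpoly E[N]}} := ((@mpolyC N E) \o f)%FUN.
Definition hY (i : 'I_#|V|) : {mpoly E[N]} := @Yp E V k w (enum_val i).
Local Notation sig := (@mmap #|V| F {mpoly E[N]} fC hY).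

Lemma sig_y v : sig (y_var F v) = Yp k w v.
Proof. by rewrite /y_var mmapX mmap1U /hY enum_rankK. Qed.

Lemma sigZ a p : sig (a *: p) = f a *: sig p.
Proof. by rewrite mmapZ /= mul_mpolyC. Qed.

Lemma sig_deg p : (pdeg (sig p) <= pdeg p)%N.
Proof.
rewrite /mmap big_seq; apply: pdeg_sum => m hm.
apply: leq_trans (pdegM _ _) _; rewrite /= pdegC add0n.
apply: leq_trans (pdeg_prod _ _ _) _.
have : (mdeg m <= pdeg p)%N by have := msize_mdeg_lt hm; rewrite /pdeg; lia.
apply: leq_trans; rewrite mdegE; apply: leq_sum => i _.
apply: leq_trans (pdegXn _ _) _; rewrite -[X in (_ <= X)%N]muln1; apply: leq_mul => //.
exact: pdeg_Yp.
Qed.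

Lemma sigX i : sig 'X_i = hY i.
Proof. by rewrite mmapX mmap1U. Qed.

Lemma sim s : pc_derivation (@y_system F V e k) false s ->
  (forall p, p \in s -> (pdeg p <= D)%N) ->
  forall t, (t <= size s)%N -> forall q, q \in take t s -> XD (sig q).
Proof.
move=> hs hdeg; elim=> [|t IH] ht q; first by rewrite take0.
rewrite (take_nth 0 ht) mem_rcons inE => /orP [/eqP -> | hq]; last first.
  by apply: IH => //; exact: ltnW.
have IH' := IH (ltnW ht).
move: (hdeg _ (mem_nth 0 ht)).
case: (hs t ht) => [hy | [q1 [q2 [a [c [h1 h2 ->]]]]] | [q0 [x [h0 ->]]] | [//]].
- case: hy => [[v ->] | [u [v [euv ->]]]] _.
    rewrite rmorphB rmorphXn rmorph1 /= sig_y; exact: L_vertex.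
  rewrite rmorph_sum; under eq_bigr do rewrite rmorphM !rmorphXn /= !sig_y.
  exact: L_edge.
- by move=> _; rewrite rmorphD /= !sigZ; apply: der_lin; apply: IH'.
- move=> hd; have [q00|qn0] := eqVneq q0 0.
    by rewrite q00 mulr0 rmorph0; apply: der0 (IH' _ h0).
  rewrite rmorphM /= sigX; apply: der_mul; first exact: IH'.
  have h1 : (pdeg (hY x) <= 1)%N := pdeg_Yp k w (enum_val x).
  move: hd; rewrite pdegMX // => hd; apply: leq_trans (leq_add h1 (sig_deg q0)) _; lia.
Qed.

End Sim.


Unset Implicit Arguments. Set Strict Implicit.

Lemma lastin (R : fieldType) n (s : seq {mpoly R[n]}) : s != [::] -> last 0 s \in s.
Proof. by case: s => // x s _ /=; apply: mem_last. Qed.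

Theorem proposition2p2 (V : finType) (e : rel V) (k d : nat) (F : fieldType) :
  (forall u v, e u v = e v u) -> (forall v, ~~ e v v) -> (0 < k)%N ->
  (forall p : nat, p \in [pchar F] -> ~~ (p %| k)%N) ->
  pc_refutation (@y_system F V e k) false d ->
  exists (E : fieldType) (f : {rmorphism F -> E}) (w : E),
    k.-primitive_root w /\
    pc_refutation (@x_system E V e k) true (maxn (2 * k) d).
Proof.
move=> _ _ hk hch [s [hs hne hlast hdeg]].
have [E [f [w hw]]] := @prim_root_ext F k hk hch.
exists E, f, w; split => //.
set D := maxn (2 * k) d.
have hD : (2 * k <= D)%N := leq_maxl _ _.
have hsD : forall p, p \in s -> (pdeg p <= D)%N.
  move=> p hp; apply: leq_trans (leq_maxr (2 * k) d); rewrite -hdeg.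
  exact: (leq_bigmax_seq p hp).
have hls : last 0 s \in take (size s) s by rewrite take_size; exact: lastin.
case: (pickP (fun _ : V => true)) => [v0 _ | hnV]; last first.
  exfalso.
  have h0 : forall t, (t <= size s)%N -> forall q, q \in take t s -> q = 0.
    elim=> [|t IH] ht q; first by rewrite take0.
    rewrite (take_nth 0 ht) mem_rcons inE => /orP [/eqP -> | hq]; last first.
      by apply: IH => //; exact: ltnW.
    have IH' := IH (ltnW ht).
    case: (hs t ht) => [hy | [q1 [q2 [a [c [h1 h2 ->]]]]] | [q0 [x [h0 ->]]] | [//]].
    - by case: hy => [[v _] | [u [v _]]]; move: (hnV v).
    - by rewrite (IH' _ h1) (IH' _ h2) !scaler0 addr0.
    - by rewrite (IH' _ h0) mulr0.
  by move: (h0 _ (leqnn _) _ hls); rewrite hlast => /eqP; rewrite oner_eq0.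
have h1 := sim f hk hw hD hs hsD (leqnn (size s)) hls.
rewrite hlast rmorph1 in h1.
set i0 : 'I_#|{: V * 'I_k}| := enum_rank (v0, Ordinal hk).
have hX := @der_mulXn _ _ _ _ _ _ i0 D h1 ltac:(by rewrite pdeg1).
rewrite mulr1 in hX.
have hXD : pdeg ('X_i0 ^+ D : {mpoly E[#|{: V * 'I_k}|]}) = D.
  by rewrite /pdeg mpolyXn msizeX mdegMn mdeg1 mul1n.
have [s1 [ds1 ne1 in1 all1]] := Der_mem hX.
have [s2 [ds2 ne2 last2 all2]] := h1.
exists (s1 ++ s2); split.
- exact: deriv_cat.
- by case: s1 {ds1 in1 all1} ne1.
- by rewrite last_cat; case: s2 {ds2 all2} ne2 last2.
- apply/eqP; rewrite eqn_leq; apply/andP; split.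
    apply/bigmax_leqP_seq => p; rewrite mem_cat => /orP [] hp _.
      exact: (allP all1).
    exact: (allP all2).
  rewrite -{1}hXD; apply: (leq_bigmax_seq ('X_i0 ^+ D)) => //.
  by rewrite mem_cat in1.
Qed.
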